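(* Let $X$ be an $n$-dimensional polyhedral normed space and let $Y \subseteq X$ be a $k$-dimensional subspace, $2 \leq k \leq n-1$, which is in general position and satisfies $\lambda(Y, X)>1$. Then every Chalmers–Metcalf operator $T=\sum_{i=1}^{l}\alpha_i x_i \otimes f_i$ for $Y$ is supported on at least $n$ pairs, i.e. $l \geq n$.
   Context: A normed space $X=(\mathbb{R}^n,\|\cdot\|)$ is polyhedral if its unit ball $B_X$ is a convex polytope; write $\mathrm{ext}\, B_X=\{x_1,\dots,x_N\}$ and $\mathrm{ext}\, B_{X^*}=\{f_1,\dots,f_M\}$ for the extreme points of the unit balls of $X$ and $X^*$. Two linear subspaces $Y,Z\subseteq\mathbb{R}^n$ are in general position if $\dim \mathrm{lin}(Y\cup Z)=\min(\dim Y+\dim Z,n)$; a subspace $Y$ is in general position if it is in general position with every subspace $\mathrm{lin}\{x_i : i\in I\}$, $I\subseteq\{1,\dots,N\}$, and every subspace $\bigcap_{i\in I}\ker f_i$, $I\subseteq\{1,\dots,M\}$. A projection onto $Y$ is a linear $P:X\to Y$ with $P|_Y=\mathrm{id}_Y$; $\lambda(Y,X)$ is the infimum of the operator norms of projections and a minimal projection is one of norm $\lambda(Y,X)$. For $x\in X$, $f\in X^*$, $x\otimes f$ is the operator $z\mapsto f(z)x$. A Chalmers–Metcalf operator for $Y$ is an operator $T=\sum_{i=1}^{l}\alpha_i x_i\otimes f_i:X\to X$ with $(x_i,f_i)\in\mathrm{ext}\,B_X\times\mathrm{ext}\,B_{X^*}$, $\alpha_i>0$, $\sum_i\alpha_i=1$,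 $T(Y)\subseteq Y$, and $f_i(P_0(x_i))=\|P_0\|=\lambda(Y,X)$ for all $i$ and some fixed minimal projection $P_0:X\to Y$. *)

(* Defs.v *)
(* R : realType, vectors of X = R^n are row vectors 'rV[R]_n,
   linear functionals are also row vectors acting via the dot product,
   linear operators X -> X are matrices acting on the right (x |-> x *m A),
   subspaces are row spaces of matrices (mxalgebra). *)
From HB Require Import structures.
From mathcomp Require Import all_boot all_order all_algebra.
From mathcomp Require Import classical_sets boolp reals.
Set Implicit Arguments. Unset Strict Implicit. Unset Printing Implicit Defensive.
Import Order.TTheory GRing.Theory Num.Theory.
Local Open Scope ring_scope.
Local Open Scope classical_set_scope.

Section PolyDefs.
Variables (R : realType) (n : nat).
Implicit Types (N : 'rV[R]_n -> R) (x y z f : 'rV[R]_n) (A : set 'rV[R]_n).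

Definition fapp f x : R := \sum_(i < n) f 0 i * x 0 i.

Definition is_norm N : Prop :=
  (forall x, N x = 0 -> x = 0) /\
  (forall (a : R) x, N (a *: x) = `|a| * N x) /\
  (forall x y, N (x + y) <= N x + N y).

Definition unit_ball N : set 'rV[R]_n := [set x | N x <= 1].

Definition dual_ball N : set 'rV[R]_n :=
  [set f | forall x, N x <= 1 -> fapp f x <= 1].

Definition conv_hull (s : seq 'rV[R]_n) : set 'rV[R]_n :=
  [set x | exists w : 'I_(size s) -> R,
     (forall i, 0 <= w i) /\ \sum_i w i = 1 /\
     x = \sum_i w i *: s`_i].

Definition polyhedral N : Prop :=
  is_norm N /\ exists s : seq 'rV[R]_n, unit_ball N = conv_hull s.

Definition extreme A x : Prop :=
  A x /\ forall y z (t : R), A y -> A z -> 0 < t < 1 ->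
    x = t *: y + (1 - t) *: z -> y = x /\ z = x.

Definition rows_of (s : seq 'rV[R]_n) : 'M[R]_(size s, n) :=
  \matrix_(i < size s) s`_i.

Definition gen_pos2 m1 m2 (Y : 'M[R]_(m1, n)) (Z : 'M[R]_(m2, n)) : Prop :=
  \rank (Y + Z)%MS = minn (\rank Y + \rank Z) n.

(* Note (rows_of s)^T has columns f_i, so kermx of it is the space of x
   with f_i(x) = 0 for all f_i in s. *)
Definition gen_pos N m (Y : 'M[R]_(m, n)) : Prop :=
  (forall s : seq 'rV[R]_n, (forall v, v \in s -> extreme (unit_ball N) v) ->
     gen_pos2 Y (rows_of s)) /\
  (forall s : seq 'rV[R]_n, (forall v, v \in s -> extreme (dual_ball N) v) ->
     gen_pos2 Y (kermx (rows_of s)^T)).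

Definition is_proj m (Y : 'M[R]_(m, n)) (P : 'M[R]_n) : Prop :=
  (P <= Y)%MS /\ Y *m P = Y.

Definition opnorm N (P : 'M[R]_n) : R :=
  sup [set c | exists x, N x <= 1 /\ c = N (x *m P)].

Definition lambda N m (Y : 'M[R]_(m, n)) : R :=
  inf [set c | exists P, is_proj Y P /\ c = opnorm N P].

Definition minimal_proj N m (Y : 'M[R]_(m, n)) (P : 'M[R]_n) : Prop :=
  is_proj Y P /\ opnorm N P = lambda N Y.

(* the rank-one operator x (x) f : z |-> f(z) x *)
Definition tens x f : 'M[R]_n := f^T *m x.

Definition CM_operator N m (Y : 'M[R]_(m, n)) (l : nat)
    (alpha : 'I_l -> R) (xs fs : 'I_l -> 'rV[R]_n) : Prop :=
  (forall i, extreme (unit_ball N) (xs i)) /\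
  (forall i, extreme (dual_ball N) (fs i)) /\
  (forall i, 0 < alpha i) /\ \sum_i alpha i = 1 /\
  (Y *m (\sum_i alpha i *: tens (xs i) (fs i)) <= Y)%MS /\
  exists P0, minimal_proj N Y P0 /\
    forall i, fapp (fs i) (xs i *m P0) = opnorm N P0.

End PolyDefs.

(* Main.v *)
Require Import Defs.
From HB Require Import structures.
From mathcomp Require Import all_boot all_order all_algebra.
From mathcomp Require Import classical_sets boolp reals.
From mathcomp Require Import ring lra zify.
Import Order.TTheory GRing.Theory Num.Theory.
Local Open Scope ring_scope.

Lemma rows_of_eq (R : realType) n l (g : 'I_l -> 'rV[R]_n) :
  (rows_of [seq g i | i <- enum 'I_l] == \matrix_(i < l) g i)%MS.
Proof.
apply/andP; split; apply/row_subP => i.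
- rewrite /rows_of rowK.
  have : [seq g i | i <- enum 'I_l]`_i \in [seq g i | i <- enum 'I_l].
    by apply: mem_nth.
  case/mapP => j _ ->; rewrite -(rowK g j); exact: row_sub.
- rewrite rowK.
  have hin : g i \in [seq g i | i <- enum 'I_l] by apply: map_f; rewrite mem_enum.
  have hi : (index (g i) [seq g i | i <- enum 'I_l] < size [seq g i | i <- enum 'I_l])%N
    by rewrite index_mem.
  rewrite -(nth_index 0 hin) -(rowK (fun j : 'I_(size [seq g i | i <- enum 'I_l]) => [seq g i | i <- enum 'I_l]`_j) (Ordinal hi)).
  exact: row_sub.
Qed.

Lemma ker_tr_eq (R : realType) n m1 m2 (A : 'M[R]_(m1, n)) (B : 'M[R]_(m2, n)) :
  (A == B)%MS -> (kermx A^T == kermx B^T)%MS.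
Proof.
have H : forall m1 m2 (A : 'M[R]_(m1, n)) (B : 'M[R]_(m2, n)),
  (A <= B)%MS -> (kermx B^T <= kermx A^T)%MS.
  move=> p1 p2 C D /submxP [W ->]; apply/sub_kermxP.
  by rewrite trmx_mul mulmxA mulmx_ker mul0mx.
by case/andP => h1 h2; apply/andP; split; apply: H.
Qed.

Lemma tens_factor (R : realType) n l (alpha : 'I_l -> R) (xs fs : 'I_l -> 'rV[R]_n) :
  \sum_i alpha i *: tens (xs i) (fs i) =
  (\matrix_(i < l) fs i)^T *m \matrix_(i < l) (alpha i *: xs i).
Proof.
apply/matrixP => a b; rewrite !mxE summxE; apply: eq_bigr => i _.
rewrite !mxE big_ord1 !mxE; ring.
Qed.

Lemma trace_T (R : realType) n l (alpha : 'I_l -> R) (xs fs : 'I_l -> 'rV[R]_n) (A : 'M[R]_n) :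
  \tr ((\sum_i alpha i *: tens (xs i) (fs i)) *m A) =
  \sum_i alpha i * fapp (fs i) (xs i *m A).
Proof.
rewrite mulmx_suml raddf_sum; apply: eq_bigr => i _.
rewrite -scalemxAl /=; rewrite mxtraceZ /tens -mulmxA mxtrace_mulC; congr (_ * _).
rewrite /mxtrace big_ord1 !mxE /fapp; apply: eq_bigr => j _; by rewrite !mxE mulrC.
Qed.

Theorem mainTheorem8 (R : realType) (n : nat) (N : 'rV[R]_n -> R)
    (k : nat) (Y : 'M[R]_(k, n)) :
  polyhedral N ->
  \rank Y = k -> (2 <= k)%N -> (k <= n - 1)%N ->
  gen_pos N Y ->
  1 < lambda N Y ->
  forall (l : nat) (alpha : 'I_l -> R) (xs fs : 'I_l -> 'rV[R]_n),
    CM_operator N Y alpha xs fs -> (n <= l)%N.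
Proof.
move=> _ hrk hk2 hkn [gx gf] hlam l alpha xs fs
  [hx [hf [hpos [hsum [hT [P0 [[[hP0Y hYP0] hP0norm] hfx]]]]]]].
set lam := opnorm N P0 in hfx hP0norm.
have hlam1 : 1 < lam by rewrite hP0norm.
set T := \sum_i alpha i *: tens (xs i) (fs i) in hT.
set Xl := \matrix_(i < l) xs i.
set Fl := \matrix_(i < l) fs i.
set G := \matrix_(i < l) (alpha i *: xs i).
set Kl := kermx Fl^T.
have hTf : T = Fl^T *m G by exact: tens_factor.
have gX : \rank (Y + Xl)%MS = minn (k + \rank Xl) n.
  have := gx [seq xs i | i <- enum 'I_l].
  rewrite /gen_pos2 hrk => h.
  have e := eqmxP (@rows_of_eq _ _ _ xs).
  rewrite -e -(adds_eqmx (eqmx_refl Y) e); apply: h.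
  by move=> v /mapP [i _ ->]; exact: hx.
have gF : \rank (Y + Kl)%MS = minn (k + \rank Kl) n.
  have := gf [seq fs i | i <- enum 'I_l].
  rewrite /gen_pos2 hrk => h.
  have e := eqmxP (@ker_tr_eq _ _ _ _ _ _ (@rows_of_eq _ _ _ fs)).
  rewrite -e -(adds_eqmx (eqmx_refl Y) e); apply: h.
  by move=> v /mapP [i _ ->]; exact: hf.
have rK : \rank Kl = (n - \rank Fl)%N by rewrite mxrank_ker mxrank_tr.
have eGX : (G == Xl)%MS.
  apply/andP; split; apply/row_subP => i; rewrite !rowK.
    by apply: scalemx_sub; rewrite -(rowK xs i); exact: row_sub.
  have -> : xs i = (alpha i)^-1 *: (alpha i *: xs i).
    by rewrite scalerA mulVf ?scale1r // gt_eqF.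
  apply: scalemx_sub; rewrite -(rowK (fun i => alpha i *: xs i) i); exact: row_sub.
have rG : \rank G = \rank Xl by apply: eqmx_rank.
have htrP : \tr (T *m P0) = lam.
  rewrite trace_T (eq_bigr (fun i => alpha i * lam)); last by move=> i _; rewrite hfx.
  by rewrite -mulr_suml hsum mul1r.
have htr1 : \tr T <= 1.
  have -> : \tr T = \tr (T *m 1%:M) by rewrite mulmx1.
  rewrite trace_T -[X in _ <= X]hsum; apply: ler_sum => i _.
  rewrite mulmx1 -[X in _ <= X]mulr1; apply: ler_wpM2l; first exact: ltW.
  have hxi := (hx i).1; have hfi := (hf i).1.
  exact: hfi.
have hKT : Kl *m T = 0 by rewrite hTf mulmxA mulmx_ker mul0mx.
have hYTX : (Y *m T <= Xl)%MS.
  rewrite hTf mulmxA; apply: submx_trans (submxMl _ _) _; exact: (proj1 (andP eGX)).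
have rFn : (\rank Fl <= n)%N by apply: rank_leq_col.
have rXl : (\rank Xl <= l)%N by apply: rank_leq_row.
case: (ltnP (\rank Fl) k) => hs.
  exfalso.
  have hfull : row_full (Y + Kl)%MS.
    by rewrite /row_full gF rK; apply/eqP; lia.
  have hTY : (T <= Y)%MS.
    rewrite -[T]mul1mx; apply: submx_trans (submxMr T (submx_full _ hfull)) _.
    by rewrite addsmxMr hKT addsmx_sub hT sub0mx.
  have hTP : T *m P0 = T by case/submxP: hTY => W ->; rewrite -mulmxA hYP0.
  by move: htrP; rewrite hTP => htr; move: htr1; rewrite htr; move: hlam1; rewrite real_ltNge ?num_real //; move/negP.
case: (ltnP (\rank Xl + k) n) => hr.
  exfalso.
  have hcap : \rank (Y :&: Xl)%MS = 0%N.
    have := mxrank_sum_cap Y Xl; rewrite gX hrk; lia.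
  have hYT0 : Y *m T = 0.
    apply/eqP; rewrite -mxrank_eq0 -leqn0 -hcap; apply: mxrankS.
    by rewrite sub_capmx hT hYTX.
  have hPT : P0 *m T = 0 by case/submxP: hP0Y => W ->; rewrite -mulmxA hYT0 mulmx0.
  move: htrP; rewrite mxtrace_mulC hPT mxtrace0 => h0.
  by move: hlam1; rewrite -h0 ltr10.
have hcapX : (\rank (Y :&: Xl)%MS + n = k + \rank Xl)%N.
  have := mxrank_sum_cap Y Xl; rewrite gX hrk; lia.
have hcapK : \rank (Y :&: Kl)%MS = 0%N.
  have := mxrank_sum_cap Y Kl; rewrite gF hrk rK; lia.
have rYF : \rank (Y *m Fl^T) = k.
  by have := mxrank_mul_ker Y Fl^T; rewrite -/Kl hcapK hrk addn0.
have h1 := mxrank_mul_ker (Y *m Fl^T) G.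
have h2 : (\rank ((Y *m Fl^T) :&: kermx G)%MS <= l - \rank Xl)%N.
  by rewrite -rG -mxrank_ker; apply: mxrankS; apply: capmxSr.
have h3 : (\rank (Y *m T) <= \rank (Y :&: Xl)%MS)%N.
  by apply: mxrankS; rewrite sub_capmx hT hYTX.
move: h1 h3; rewrite rYF hTf mulmxA => h1 h3.
move: h1 h2 h3 hcapX rXl.
set a := \rank (_ *m G); set b := \rank (_ :&: kermx G); set c := \rank (Y :&: Xl); set r := \rank Xl.
have key : forall a b c r : nat, (a + b)%N = k -> (b <= l - r)%N -> (a <= c)%N -> (c + n)%N = (k + r)%N -> (r <= l)%N -> (n <= l)%N by move=> *; lia.
exact: key.
Qed.
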